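(* For every positive integer $n$, $$(\sigma\ast\delta)(n)=\tfrac12\,(\mathbf 1\ast \tau\delta)(n),$$ where $\tau\delta$ is the pointwise product.
   Context: The arithmetic derivative $\delta$ is defined by $\delta(p)=1$ for every prime $p$ and $\delta(mn)=m\delta(n)+n\delta(m)$ for all positive integers $m,n$; equivalently $\delta(1)=0$ and $\delta(n)=n\sum_{p^\alpha\| n}\alpha/p$. $\mathbf 1(n)=1$ for all $n$, $\sigma(n)$ is the sum of the positive divisors of $n$, $\tau(n)$ is the number of positive divisors of $n$. The Dirichlet convolution is $(u\ast v)(n)=\sum_{d\mid n}u(d)v(n/d)$. *)

(* Defs.v *)
From mathcomp Require Import all_boot all_order all_algebra.
Set Implicit Arguments. Unset Strict Implicit. Unset Printing Implicit Defensive.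

(* Arithmetic derivative: delta(n) = n * sum_{p^a || n} a/p, delta(1) = 0.
   Written without division as sum_{p | n prime} logn p n * (n / p). *)
Definition arith_deriv (n : nat) : nat :=
  \sum_(p <- primes n) logn p n * (n %/ p).

Definition sigma (n : nat) : nat := \sum_(d <- divisors n) d.
Definition tau (n : nat) : nat := size (divisors n).

Definition dconv (u v : nat -> rat) (n : nat) : rat :=
  (\sum_(d <- divisors n) u d * v (n %/ d)%N)%R.

Definition one_fn : nat -> rat := fun _ => 1%R.

(* Main.v *)
Require Import Defs.
From mathcomp Require Import all_boot all_order all_algebra.
Import GRing.Theory Num.Theory.
Local Open Scope ring_scope.

Definition L (n : nat) : rat := \sum_(p <- primes n) (logn p n)%:R / p%:R.

Lemma L_sub (a : nat) (s : seq nat) : uniq s -> {subset primes a <= s} ->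
  \sum_(p <- s) (logn p a)%:R / (p%:R : rat) = L a.
Proof.
move=> us sub; rewrite /L; apply: perm_big_supp.
apply: uniq_perm; rewrite ?filter_uniq ?primes_uniq //.
move=> p; rewrite !mem_filter; case Hp: (_ != 0) => //=.
have: (logn p a != 0)%N.
  apply: contraNneq Hp => ->; by rewrite mul0r.
rewrite -lt0n logn_gt0 => pa; rewrite pa; exact: sub.
Qed.

Lemma L_mul (a b : nat) : (0 < a)%N -> (0 < b)%N -> L (a * b) = L a + L b.
Proof.
move=> a0 b0; rewrite {1}/L.
under eq_bigr => p _ do rewrite lognM // natrD mulrDl.
rewrite big_split /= !L_sub ?primes_uniq // => p pp; rewrite primesM ?pp ?orbT //.
Qed.

Lemma D_eq (n : nat) : (0 < n)%N -> (arith_deriv n)%:R = n%:R * L n :> rat.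
Proof.
move=> n0; rewrite /arith_deriv /L natr_sum mulr_sumr; apply: eq_big_seq => p.
rewrite mem_primes => /and3P[pp _ pn].
rewrite natrM natr_div //; last by by rewrite unitfE pnatr_eq0 -lt0n prime_gt0.
by rewrite mulrCA mulrA.
Qed.
Lemma div_refl (n : nat) (F : nat -> rat) : (0 < n)%N ->
  \sum_(d <- divisors n) F (n %/ d)%N = \sum_(d <- divisors n) F d.
Proof.
move=> n0; rewrite -(big_map (fun d => n %/ d)%N xpredT F).
apply: perm_big; apply: uniq_perm; rewrite ?divisors_uniq //.
  rewrite map_inj_in_uniq ?divisors_uniq // => x y.
  rewrite -!dvdn_divisors // => xn yn e.
  by rewrite -[x](mulKn _ n0) -(divnA n xn) e divnA // mulKn.
move=> x; apply/mapP/idP.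
  by case=> d; rewrite -!dvdn_divisors // => /dvdn_div ? ->.
rewrite -dvdn_divisors // => xn; exists (n %/ x)%N; first by rewrite -dvdn_divisors // dvdn_div.
by rewrite divnA // mulKn.
Qed.

Lemma div_exch (n : nat) (F : nat -> nat -> rat) : (0 < n)%N ->
  \sum_(d <- divisors n) \sum_(e <- divisors d) F e d =
  \sum_(e <- divisors n) \sum_(k <- divisors (n %/ e)) F e (e * k)%N.
Proof.
move=> n0.
rewrite -(@big_allpairs_dep rat 0 _ nat (fun _ => nat) (nat*nat)%type (fun d e : nat => (e, d)) (divisors n) divisors (fun p => F p.1 p.2)).
rewrite -(@big_allpairs_dep rat 0 _ nat (fun _ => nat) (nat*nat)%type (fun e k : nat => (e, e * k)%N) (divisors n) (fun e => divisors (n %/ e)) (fun p => F p.1 p.2)).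
apply: perm_big; apply: uniq_perm.
- apply: allpairs_uniq_dep; first exact: divisors_uniq.
    by move=> ? _; exact: divisors_uniq.
  by move=> [x1 y1] [x2 y2] _ _ /= [-> ->].
- apply: allpairs_uniq_dep; first exact: divisors_uniq.
    by move=> ? _; exact: divisors_uniq.
  move=> [x1 y1] [x2 y2] H1 _ /= [e1 e2]; subst x2.
  case/allpairsPdep: H1 => a [b [an _ E]].
  have ex : x1 = a := congr1 tag E.
  subst a.
  have x10 : (0 < x1)%N by move: an; rewrite -dvdn_divisors // => /(dvdn_gt0 n0).
  by move/(congr1 (fun z => z %/ x1)%N): e2; rewrite !mulKn // => ->.
move=> [e d]; apply/allpairsPdep/allpairsPdep.
- case=> d' [e' [dn ed [-> ->]]].
  have d0 : (0 < d')%N by move: dn; rewrite -dvdn_divisors // => /(dvdn_gt0 n0).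
  move: dn ed; rewrite -!dvdn_divisors // => dn ed.
  have e0 : (0 < e')%N by apply: dvdn_gt0 ed.
  exists e', (d' %/ e')%N; split.
  + by rewrite -dvdn_divisors //; apply: dvdn_trans dn.
  + have ne0 : (0 < n %/ e')%N by rewrite divn_gt0 // dvdn_leq // (dvdn_trans ed dn).
    rewrite -dvdn_divisors // dvdn_divRL ?(dvdn_trans ed dn) // (divnK ed) //.
  + by rewrite [(e' * _)%N]mulnC (divnK ed).
- case=> e' [k [en kn [-> ->]]].
  move: en; rewrite -dvdn_divisors // => en.
  have e0 : (0 < e')%N by apply: dvdn_gt0 en.
  have ne0 : (0 < n %/ e')%N by rewrite divn_gt0 // dvdn_leq.
  move: kn; rewrite -dvdn_divisors // dvdn_divRL // => kn.
  have k0 : (0 < e' * k)%N by apply: dvdn_gt0 n0 _; rewrite mulnC.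
  exists (e' * k)%N, e'; split => //.
  + by rewrite -dvdn_divisors // mulnC.
  + by rewrite -dvdn_divisors // dvdn_mulr.
Qed.

Lemma sum_const_seq (s : seq nat) (c : rat) : \sum_(i <- s) c = (size s)%:R * c.
Proof. elim: s => [|x s IH]; first by rewrite big_nil mul0r.
by rewrite big_cons IH /= -addn1 natrD mulrDl mul1r addrC. Qed.

Lemma T_eq (m : nat) : (0 < m)%N ->
  2%:R * \sum_(e <- divisors m) e%:R * (arith_deriv (m %/ e))%:R
  = (tau m * arith_deriv m)%:R :> rat.
Proof.
move=> m0.
have H : \sum_(e <- divisors m) e%:R * (arith_deriv (m %/ e))%:R
       = m%:R * \sum_(e <- divisors m) L e :> rat.
  rewrite -(div_refl m L m0) mulr_sumr; apply: eq_big_seq => e.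
  rewrite -dvdn_divisors // => em.
  have e0 : (0 < e)%N := dvdn_gt0 m0 em.
  have me0 : (0 < m %/ e)%N by rewrite divn_gt0 // dvdn_leq.
  have emK : (e * (m %/ e))%N = m by rewrite mulnC divnK.
  by rewrite D_eq // mulrA; congr (_ * _); rewrite -[in RHS]emK natrM.
rewrite H natrM (D_eq _ m0) mulr2n mulrDl mul1r.
rewrite [X in m%:R * X + _](_ : _ = \sum_(e <- divisors m) L (m %/ e)%N); last by rewrite div_refl.
rewrite -mulrDr -big_split /=.
rewrite (eq_big_seq (fun _ => L m)); last first.
  move=> e; rewrite -dvdn_divisors // => em.
  have e0 : (0 < e)%N := dvdn_gt0 m0 em.
  have me0 : (0 < m %/ e)%N by rewrite divn_gt0 // dvdn_leq.
  have emK : (e * (m %/ e))%N = m by rewrite mulnC divnK.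
  by rewrite -L_mul // divnK.
by rewrite sum_const_seq /tau mulrCA mulrA.
Qed.

Theorem mainTheorem7 (n : nat) : (0 < n)%N ->
  dconv (fun m => (sigma m)%:R) (fun m => (arith_deriv m)%:R) n
  = 2^-1 * dconv one_fn (fun m => (tau m * arith_deriv m)%:R) n.
Proof.
move=> n0; rewrite /dconv /one_fn.
have -> : \sum_(d <- divisors n) (sigma d)%:R * (arith_deriv (n %/ d))%:R
   = \sum_(d <- divisors n) \sum_(e <- divisors d) e%:R * (arith_deriv (n %/ d))%:R :> rat.
  by apply: eq_bigr => d _; rewrite /sigma natr_sum mulr_suml.
rewrite (div_exch n (fun e d => e%:R * (arith_deriv (n %/ d))%:R) n0).
rewrite (div_refl n (fun d => 1 * (tau d * arith_deriv d)%:R) n0).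
have -> : \sum_(d <- divisors n) 1 * (tau d * arith_deriv d)%:R
   = 2%:R * \sum_(d <- divisors n) \sum_(e <- divisors d) e%:R * (arith_deriv (d %/ e))%:R :> rat.
  rewrite mulr_sumr; apply: eq_big_seq => d; rewrite -dvdn_divisors // => dn.
  by rewrite mul1r T_eq // (dvdn_gt0 n0 dn).
rewrite mulrA mulVf ?pnatr_eq0 // mul1r.
rewrite (div_exch n (fun e d => e%:R * (arith_deriv (d %/ e))%:R) n0).
apply: eq_big_seq => e; rewrite -dvdn_divisors // => en.
have e0 : (0 < e)%N := dvdn_gt0 n0 en.
have ne0 : (0 < n %/ e)%N by rewrite divn_gt0 // dvdn_leq.
under eq_bigr => k _ do rewrite divnMA.
under [RHS]eq_bigr => k _ do rewrite mulKn //.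
rewrite -!mulr_sumr; congr (_ * _).
exact: (div_refl (n %/ e)%N (fun k => (arith_deriv k)%:R) ne0).
Qed.
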